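(* Let $\rho$ be any pairing of $\{1,\dots,2n\}$ and $\pi$ any planar pairing of $\{1,\dots,2n\}$. Then $$\mathrm{sign}_{OE}(\pi)\,(-1)^{c(\pi\cup\rho)}\,(-1)^{n}\,2^{c(\pi\cup\rho)}=\sum_{\sigma\ \text{planar pairing}}\mathcal P_{\sigma,\rho}\,\mathrm{sign}_{OE}(\sigma)\,2^{c(\pi\cup\sigma)}.$$
   Context: A pairing of $\{1,\dots,2n\}$ is a partition into 2-element blocks; $\{a,c\},\{b,d\}$ cross if $a<b<c<d$; planar = no crossings; planar pairings are odd-even (each pair has an odd and even element), and $\mathrm{sign}_{OE}(\sigma)$ is the sign of the permutation $(\sigma(1)/2,\sigma(3)/2,\dots,\sigma(2n-1)/2)$. $c(\pi\cup\rho)$ is the number of connected components of the multigraph on $\{1,\dots,2n\}$ with an edge for each pair of $\pi$ and each pair of $\rho$. $\mathcal P_{\sigma,\rho}$ is the coefficient of $\sigma$ when $\rho$ is written as a formal integer combination of planar pairings by repeatedly applying the rule: if $\{a,c\},\{b,d\}$ are pairs with $a<b<c<d$, replace $\{a,c\},\{b,d\},\text{rest}$ by $-(\{a,b\},\{c,d\},\text{rest})-(\{a,d\},\{b,c\},\text{rest})$ (the result is independent of choices; for planar $\rho$, $\mathcal P_{\sigma,\rho}=\mathbf 1_{\sigma=\rho}$). *)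

(* Defs.v *)
From HB Require Import structures.
From mathcomp Require Import all_boot all_order all_algebra all_fingroup.
Set Implicit Arguments. Unset Strict Implicit. Unset Printing Implicit Defensive.
Import GRing.Theory.

(* Points 1..2n of the paper are represented 0-indexed as 'I_(n.*2):
   paper point i  <->  ordinal i-1.  A pairing is a fixed-point-free
   involution sigma : {ffun 'I_(n.*2) -> 'I_(n.*2)}; its blocks are {i, sigma i}. *)
Definition pairing_of (n : nat) := {ffun 'I_(n.*2) -> 'I_(n.*2)}.

Definition is_pairing n (s : pairing_of n) : bool :=
  [forall i, (s i != i) && (s (s i) == i)].

Definition crosses n (s : pairing_of n) (a b : 'I_(n.*2)) : bool :=
  [&& a < b, b < s a & s a < s b].

Definition planar n (s : pairing_of n) : bool :=
  [forall a, forall b, ~~ crosses s a b].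

(* value of s at a natural-number position (0 outside the range) *)
Definition at_nat n (s : pairing_of n) (i : nat) : nat :=
  if insub i is Some j then val (s j) else 0%N.

(* sign_OE: sign of the permutation k |-> s(2k-1)/2 (paper, 1-indexed),
   i.e. k |-> (s (2k))./2 for 0-indexed k : 'I_n.  It is 0 if this map is
   not a permutation (never the case for planar pairings). *)
Definition sign_OE n (s : pairing_of n) : int :=
  match [pick p : 'S_n | [forall k : 'I_n, val (p k) == (at_nat s k.*2)./2]] with
  | Some p => ((-1) ^+ odd_perm p)%R
  | None => 0%R
  end.

(* c(pi u rho): number of connected components of the multigraph on the points
   with one edge per block of pi and one per block of rho. *)
Definition union_rel n (p r : pairing_of n) : rel 'I_(n.*2) :=
  fun x y => (p x == y) || (r x == y) || (p y == x) || (r y == x).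

Definition ncomp n (p r : pairing_of n) : nat :=
  n_comp (union_rel p r) 'I_(n.*2).

Definition repair n (s : pairing_of n) (x1 y1 x2 y2 : 'I_(n.*2)) : pairing_of n :=
  [ffun x => if x == x1 then y1 else if x == y1 then x1
             else if x == x2 then y2 else if x == y2 then x2 else s x].

(* Coefficient of sigma obtained by repeatedly resolving crossings:
   {a,c},{b,d} (a<b<c<d) -> -({a,b},{c,d}) - ({a,d},{b,c}).
   The crossing resolved at each step is chosen by [pick] (the result is
   independent of choices).  Each resolution strictly decreases the number of
   crossings, so fuel (n.*2)^2 suffices. *)
Fixpoint Pcoef_fuel n (fuel : nat) (sigma rho : pairing_of n) : int :=
  if planar rho then Posz (sigma == rho) else
  match fuel with
  | 0 => 0%R
  | fuel'.+1 =>
    match [pick ab : 'I_(n.*2) * 'I_(n.*2) | crosses rho ab.1 ab.2] with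
    | Some (a, b) =>
        let c := rho a in let d := rho b in
        (- Pcoef_fuel fuel' sigma (repair rho a b c d)
         - Pcoef_fuel fuel' sigma (repair rho a d b c))%R
    | None => 0%R
    end
  end.

Definition Pcoef n (sigma rho : pairing_of n) : int :=
  Pcoef_fuel ((n.*2) ^ 2) sigma rho.

(* Main.v *)
Require Import Defs.
From HB Require Import structures.
From mathcomp Require Import all_boot all_order all_algebra all_fingroup.
From mathcomp Require Import zify ring.
Set Implicit Arguments. Unset Strict Implicit. Unset Printing Implicit Defensive.

Definition pp (T : finType) (f : {ffun T -> T}) : {perm T} := insubd (1%g : {perm T}) f.

Lemma ppE (T : finType) (f : {ffun T -> T}) : injective f -> forall x, pp f x = f x.
Proof.
move=> inj x; rewrite /pp.
have -> : (insubd (1%g : {perm T}) f : {perm T}) = perm inj.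
  apply/val_inj; rewrite val_insubd.
  rewrite (introT (@injectiveP _ _ f) inj) /=.
  by apply/ffunP => y; rewrite pvalE permE.
by rewrite permE.
Qed.

Lemma porbit_trans (T : finType) (s : {perm T}) x y z :
  x \in porbit s y -> y \in porbit s z -> x \in porbit s z.
Proof. by rewrite -!eq_porbit_mem => /eqP -> . Qed.

Section Orb.
Variable T : finType.
Variables p r : {ffun T -> T}.
Hypothesis pK : involutive p.
Hypothesis rK : involutive r.
Hypothesis pF : forall x, p x != x.
Hypothesis rF : forall x, r x != x.

Let P := pp p.
Let R := pp r.
Definition sperm := (R * P)%g.
Local Notation s := sperm.

Lemma sE x : s x = p (r x).
Proof. by rewrite permM /P /R !ppE //; apply: can_inj. Qed.

Lemma sVE x : (s^-1)%g x = r (p x).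
Proof. by rewrite -{1}[x]pK -{1}[p x]rK -sE permK. Qed.

Lemma pX i x : p ((s ^+ i)%g x) = ((s^-1) ^+ i)%g (p x).
Proof.
elim: i => [|i IH]; first by rewrite !expg0 !perm1.
by rewrite !expgSr (permM (s ^+ i)%g) (permM (s^-1 ^+ i)%g) sE pK sVE -IH pK.
Qed.

Lemma K1 x y : y \in porbit s x -> p y \in porbit s (p x).
Proof. by case/porbitP => i ->; rewrite pX -porbitV mem_porbit. Qed.

Lemma K1E x y : (p y \in porbit s (p x)) = (y \in porbit s x).
Proof. apply/idP/idP; last exact: K1. by move/K1; rewrite !pK. Qed.

Lemma K2 x : p x \notin porbit s x.
Proof.
apply/negP => /porbitP [i Hi].
rewrite -(odd_double_half i) in Hi.
set j := i./2 in Hi.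
have HV : forall z, ((s ^-1) ^+ j)%g z = ((s ^+ j)^-1)%g z by move=> z; rewrite expgVn.
case: (odd i) Hi => /= Hi.
- have E : (1 + j.*2 = j.+1 + j)%N by rewrite -addnn addnA add1n.
  have: p ((s ^+ j)%g x) = s ((s ^+ j)%g x).
    rewrite pX Hi HV E expgD (permM (s ^+ j.+1)%g) permK.
    by rewrite expgSr (permM (s ^+ j)%g).
  rewrite sE => /(can_inj pK) /eqP; rewrite eq_sym; apply/negP; exact: rF.
- have E : (0 + j.*2 = j + j)%N by rewrite -addnn.
  have: p ((s ^+ j)%g x) = ((s ^+ j)%g x).
    by rewrite pX Hi HV E expgD (permM (s ^+ j)%g) permK.
  by move/eqP; apply/negP; exact: pF.
Qed.

Lemma r_orb y : r y \in porbit s (p y).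
Proof.
rewrite porbit_sym; have -> : p y = s (r y) by rewrite sE rK.
by have := mem_porbit s 1 (r y); rewrite expg1.
Qed.

Definition urel : rel T := fun x y => (p x == y) || (r x == y) || (p y == x) || (r y == x).

Lemma urel_sym : symmetric urel.
Proof. by move=> x y; rewrite /urel; do !case: eqP => //. Qed.

Lemma connect_s x : connect urel x (s x).
Proof.
rewrite sE.
have h1 : urel x (r x) by rewrite /urel eqxx ?orbT.
have h2 : urel (r x) (p (r x)) by rewrite /urel eqxx ?orbT.
exact: connect_trans (connect1 h1) (connect1 h2).
Qed.

Lemma connect_p x : connect urel x (p x).
Proof. by apply: connect1; rewrite /urel eqxx. Qed.

Lemma connect_orb x y : y \in porbit s x -> connect urel x y.
Proof.
case/porbitP => i ->; elim: i => [|i IH]; first by rewrite expg0 perm1 connect0.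
by rewrite expgSr permM; apply: connect_trans IH (connect_s _).
Qed.

Definition Kset x : pred T := fun y => (y \in porbit s x) || (y \in porbit s (p x)).

Lemma Kset_p x y : y \in Kset x -> p y \in Kset x.
Proof.
case/orP => H; apply/orP; [right | left]; first exact: K1.
by rewrite -[x]pK; apply: K1.
Qed.

Lemma Kset_r x y : y \in Kset x -> r y \in Kset x.
Proof.
move/Kset_p; case/orP => H; apply/orP; [left|right]; exact: porbit_trans (r_orb y) H.
Qed.

Lemma connect_K x y : connect urel x y = (y \in Kset x).
Proof.
apply/idP/idP; last first.
  case/orP; first exact: connect_orb.
  by move=> H; apply: connect_trans (connect_p x) (connect_orb H).
move=> C.
have cl : closed urel (Kset x).
  apply: (intro_closed (sym_connect_sym urel_sym)).
  move=> u v; rewrite /urel -!orbA => /or4P [] /eqP <- Hu.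
  - exact: Kset_p.
  - exact: Kset_r.
  - by rewrite -[v]pK in Hu *; apply: Kset_p; rewrite pK in Hu *. 
  - by rewrite -[v]rK in Hu *; apply: Kset_r; rewrite rK in Hu *.
by rewrite -(closed_connect cl C); apply/orP; left; exact: porbit_id.
Qed.


Lemma csym : connect_sym urel.
Proof. exact: sym_connect_sym urel_sym. Qed.

Lemma roots_eq x1 x2 : roots urel x1 -> roots urel x2 -> connect urel x1 x2 -> x1 = x2.
Proof. by move=> /eqP h1 /eqP h2 /(fingraph.rootP csym); rewrite h1 h2. Qed.

Lemma ncomp_porbits : (n_comp urel T).*2 = #|porbits s|.
Proof.
set Rs := [set x | roots urel x].
have -> : n_comp urel T = #|Rs| by apply: eq_card => x; rewrite !inE andbT.
set A := porbit s @: Rs.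
set B := (fun x => porbit s (p x)) @: Rs.
have EU : porbits s = A :|: B.
  apply/setP => O; rewrite inE; apply/imsetP/orP.
  - case=> y _ ->; set z := fingraph.root urel y.
    have rz : z \in Rs by rewrite inE; exact: fingraph.roots_root csym y.
    have : connect urel z y by rewrite csym; exact: fingraph.connect_root.
    rewrite connect_K => /orP [] H; [left|right]; apply/imsetP; exists z => //.
      by apply/eqP; rewrite eq_porbit_mem.
    by apply/eqP; rewrite eq_porbit_mem.
  - by case=> /imsetP [x _ ->]; [exists x | exists (p x)].
have injA : {in Rs &, injective (porbit s)}.
  move=> x1 x2; rewrite !inE => r1 r2 /eqP; rewrite eq_porbit_mem => H.
  exact: esym (roots_eq r2 r1 (connect_orb H)).
have injB : {in Rs &, injective (fun x => porbit s (p x))}.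
  move=> x1 x2; rewrite !inE => r1 r2 /eqP; rewrite eq_porbit_mem K1E => H.
  exact: esym (roots_eq r2 r1 (connect_orb H)).
have D : A :&: B = set0.
  apply/setP => O; rewrite !inE; apply/negP => /andP [/imsetP [x1 r1 ->] /imsetP [x2 r2 /eqP]].
  rewrite eq_porbit_mem => H.
  have C : connect urel x2 x1 by rewrite connect_K; apply/orP; right.
  move: r1 r2; rewrite !inE => r1 r2.
  have E := roots_eq r2 r1 C; subst x2.
  by move: (K2 x1); rewrite porbit_sym H.
rewrite EU cardsU D cards0 subn0 (card_in_imset injA) (card_in_imset injB).
by rewrite addnn.
Qed.

End Orb.


Section Tp.
Variable T : finType.
Implicit Types (s : {perm T}) (x y z : T).
Local Open Scope group_scope.

Lemma L0 s x y : x != y ->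
  (x \in porbit (tperm x y * s) y) = (x \notin porbit s y).
Proof.
move=> nxy.
have E1 := porbits_mul_tperm s x y.
have E2 := porbits_mul_tperm (tperm x y * s) x y.
rewrite /= tpermKg nxy in E1 E2.
move: E1 E2; case: (x \in porbit (tperm x y * s) y); case: (x \in porbit s y) => /=; lia.
Qed.

Lemma Lcnt s x y : x != y ->
  #|porbits (tperm x y * s)| + (x \notin porbit s y).*2 = #|porbits s| + 1.
Proof. by move=> nxy; have := porbits_mul_tperm s x y; rewrite /= nxy. Qed.

Lemma L1 s x y z : x \notin porbit s z -> y \notin porbit s z ->
  porbit (tperm x y * s) z = porbit s z.
Proof.
move=> sxz syz.
suffices exp_id n: ((tperm x y * s) ^+ n) z = (s ^+ n) z.
  apply/porbit_setP => u; apply/idP/idP=> /porbitP[i ->].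
    by rewrite exp_id mem_porbit.
  by rewrite -exp_id mem_porbit.
elim: n => // n IHn; rewrite !expgSr (permM ((tperm x y * s) ^+ n)) (permM (s ^+ n)) IHn.
rewrite permM tpermD //.
  by apply: contraNneq sxz => ->; apply: mem_porbit.
by apply: contraNneq syz => ->; apply: mem_porbit.
Qed.

Lemma ML s x y z : x \notin porbit s y -> z \in porbit s x ->
  z \in porbit (tperm x y * s) x.
Proof.
move=> nxy /porbitP [k ->].
have xy : x != y by apply: contraNneq nxy => ->; exact: porbit_id.
have Hy : y \notin porbit s x by rewrite porbit_sym.
elim: k => [|k IH]; first by rewrite expg0 perm1 porbit_id.
rewrite expgSr (permM (s ^+ k)).
set w := (s ^+ k) x in IH *.
have -> : s w = (tperm x y * s) (if w == x then y else w).
  rewrite permM; case: eqP => [->|/eqP wx]; first by rewrite tpermR.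
  rewrite tpermD; first by [].
    by rewrite eq_sym.
  by apply/negP => /eqP yw; move: Hy; rewrite yw /w mem_porbit.
have H1 : forall u, u \in porbit (tperm x y * s) x -> (tperm x y * s) u \in porbit (tperm x y * s) x.
  move=> u Hu; apply: porbit_trans _ Hu.
  by have := mem_porbit (tperm x y * s) 1 u; rewrite expg1.
case: eqP => _; apply: H1 => //.
by rewrite porbit_sym L0.
Qed.

Lemma MLr s x y z : x \notin porbit s y -> z \in porbit s y ->
  z \in porbit (tperm x y * s) x.
Proof.
move=> nxy Hz.
have xy : x != y by apply: contraNneq nxy => ->; exact: porbit_id.
have nyx : y \notin porbit s x by rewrite porbit_sym.
have := ML nyx Hz; rewrite tpermC => H.
apply: porbit_trans H _; by rewrite porbit_sym L0.
Qed.

End Tp.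


Section Skein.
Variable T : finType.
Variables p r : {ffun T -> T}.
Hypothesis pK : involutive p.
Hypothesis rK : involutive r.
Hypothesis pF : forall x, p x != x.
Hypothesis rF : forall x, r x != x.
Variables a b c d : T.
Hypotheses (ab : a != b) (ac : a != c) (ad : a != d) (bc : b != c) (bd : b != d) (cd : c != d).
Hypotheses (rac : r a = c) (rbd : r b = d).
Local Open Scope group_scope.
Let s := sperm p r.

Lemma skein_counts :
 let N := #|porbits s| in
 let N1 := #|porbits (tperm a d * (tperm b c * s))| in
 let N2 := #|porbits (tperm a b * (tperm c d * s))| in
 (N1 + 2 = N /\ N2 + 2 = N)%N \/ (N1 = N /\ N2 = N + 2)%N \/ (N1 = N + 2 /\ N2 = N)%N.
Proof.
move=> N N1 N2.
set u := tperm b c * s; set v := tperm c d * s.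
have E1 := Lcnt s bc; have E2 := Lcnt u ad; have E3 := Lcnt s cd; have E4 := Lcnt v ab.
rewrite -/u in E1; rewrite -/v in E3; rewrite -/N -/N1 in E1 E2 E3; rewrite -/N2 in E4.
have K2' x : porbit s (p x) != porbit s x by rewrite eq_porbit_mem; exact: K2.
have K1' x y : (porbit s (p x) == porbit s (p y)) = (porbit s x == porbit s y).
  by rewrite !eq_porbit_mem K1E.
have Oc : porbit s c = porbit s (p a).
  have h : s c = p a by rewrite /s (sE pK rK) -rac rK.
  apply/eqP; rewrite eq_sym eq_porbit_mem -h.
  by have := mem_porbit s 1 c; rewrite expg1.
have Od : porbit s d = porbit s (p b).
  have h : s d = p b by rewrite /s (sE pK rK) -rbd rK.
  apply/eqP; rewrite eq_sym eq_porbit_mem -h.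
  by have := mem_porbit s 1 d; rewrite expg1.
have cNa : c \notin porbit s a by rewrite -eq_porbit_mem Oc.
have Opp x : porbit s (p (p x)) = porbit s x by rewrite pK.
case: (boolP (porbit s b == porbit s a)) => hba.
-
  have e1 : (b \notin porbit s c) = true.
    by rewrite -eq_porbit_mem (eqP hba) Oc eq_sym K2'.
  have hdc : d \in porbit s c by rewrite -eq_porbit_mem Od Oc K1'.
  have nbc : b \notin porbit s c by rewrite e1.
  have e2 : (a \notin porbit u d) = false.
    apply/negbF; apply: porbit_trans (ML nbc _) _.
      by rewrite -eq_porbit_mem eq_sym.
    by rewrite porbit_sym; apply: MLr.
  have e3 : (c \notin porbit s d) = false by rewrite porbit_sym hdc.
  have dNa : d \notin porbit s a.
    by apply: contra cNa => H; apply: porbit_trans H; rewrite porbit_sym.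
  have e4 : (a \notin porbit v b) = false.
    by apply/negbF; rewrite porbit_sym L1 // -eq_porbit_mem.
  rewrite e1 in E1; rewrite e2 in E2; rewrite e3 in E3; rewrite e4 in E4.
  clearbody N N1 N2; move: #|porbits u| #|porbits v| E1 E2 E3 E4 => x y E1 E2 E3 E4.
  rewrite /= in E1 E2 E3 E4; clear -E1 E2 E3 E4; right; left; lia.
have bNa : b \notin porbit s a by rewrite -eq_porbit_mem.
have fin : forall e1 e2 e3 e4 : bool,
  (#|porbits u| + e1.*2 = N + 1 -> N1 + e2.*2 = #|porbits u| + 1 ->
   #|porbits v| + e3.*2 = N + 1 -> N2 + e4.*2 = #|porbits v| + 1 ->
   ((e1 && ~~ e2 && ~~ e3 && ~~ e4) || (~~ e1 && ~~ e2 && e3 && ~~ e4) || (e1 && e2 && e3 && e4)) ->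
  (N1 + 2 = N /\ N2 + 2 = N)%N \/ (N1 = N /\ N2 = N + 2)%N \/ (N1 = N + 2 /\ N2 = N)%N).
  clearbody N N1 N2; move: #|porbits u| #|porbits v| => x y.
  by case; case; case; case => //= F1 F2 F3 F4 _; clear -F1 F2 F3 F4; lia.
case: (boolP (porbit s b == porbit s c)) => hbc.
- have e1 : (b \notin porbit s c) = false by rewrite -eq_porbit_mem hbc.
  have hda : d \in porbit s a.
    by rewrite -eq_porbit_mem Od -(Opp a) K1' (eqP hbc) Oc.
  have e2 : (a \notin porbit u d) = false.
    by apply/negbF; rewrite porbit_sym /u L1.
  have e3 : (c \notin porbit s d) = true.
    apply/negP => H; move: cNa; rewrite -eq_porbit_mem.
    by move: H hda; rewrite -!eq_porbit_mem => /eqP -> ->.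
  have ncd : c \notin porbit s d by rewrite e3.
  have e4 : (a \notin porbit v b) = false.
    have h1 : b \in porbit v c by apply: ML ncd _; rewrite -eq_porbit_mem.
    have h2 : a \in porbit v c by apply: MLr ncd _; rewrite porbit_sym.
    by apply/negbF; apply: porbit_trans h2 _; rewrite porbit_sym.
  by apply: (fin _ _ _ _ E1 E2 E3 E4); rewrite e1 e2 e3 e4.
have e1 : (b \notin porbit s c) = true by rewrite -eq_porbit_mem hbc.
have dNa : d \notin porbit s a.
  by rewrite -eq_porbit_mem Od -(Opp a) K1' -Oc.
have e2 : (a \notin porbit u d) = true.
  by rewrite porbit_sym /u L1.
have e3 : (c \notin porbit s d) = true.
  by rewrite -eq_porbit_mem Oc Od K1' eq_sym.
have e4 : (a \notin porbit v b) = true.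
  by rewrite porbit_sym /v L1.
by apply: (fin _ _ _ _ E1 E2 E3 E4); rewrite e1 e2 e3 e4.
Qed.
End Skein.


Lemma sumID (I : finType) (G : I -> nat) (S : seq I) :
  \sum_u G u = \sum_(u in S) G u + \sum_(u | u \notin S) G u.
Proof. by rewrite (bigID (fun v => v \in S)). Qed.

Lemma split4 (I : finType) (F : I -> I -> nat) (S : seq I) :
 \sum_u \sum_v F u v = \sum_(u in S) \sum_(v in S) F u v
   + \sum_(v | v \notin S) \sum_(u in S) (F u v + F v u)
   + \sum_(u | u \notin S) \sum_(v | v \notin S) F u v.
Proof.
under eq_bigr => u _ do rewrite (sumID _ S).
rewrite big_split /= (sumID _ S) [X in _ + X](sumID _ S).
have -> : \sum_(u | u \notin S) \sum_(v in S) F u v = \sum_(u in S) \sum_(v | v \notin S) F v u.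
  by rewrite exchange_big.
have -> : \sum_(v | v \notin S) \sum_(u in S) (F u v + F v u)
   = \sum_(u in S) \sum_(v | v \notin S) F u v + \sum_(u in S) \sum_(v | v \notin S) F v u.
  by rewrite exchange_big -big_split /=; apply: eq_bigr => u _; rewrite big_split.
by rewrite -!addnA; congr (_ + _); rewrite !addnA; congr (_ + _); exact: addnC.
Qed.

Definition crn (u v su sv : nat) : nat := [&& u < v, v < su & su < sv].
Ltac cmp x y H := let h := fresh "h" in case: (ltngtP x y) => h;
  [ try (exfalso; lia) | try (exfalso; lia) | by rewrite h eqxx in H].

Lemma ineq1 (a b c d v w : nat) : a < b -> b < c -> c < d ->
  v != a -> v != b -> v != c -> v != d -> w != a -> w != b -> w != c -> w != d ->
  crn a v b w + crn v a w b + (crn b v a w + crn v b w a + (crn c v d w + crn v c w d + (crn d v c w + crn v d w c + 0)))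
  <= crn a v c w + crn v a w c + (crn b v d w + crn v b w d + (crn c v a w + crn v c w a + (crn d v b w + crn v d w b + 0))).
Proof. rewrite /crn => ab bc cd va vb vc vd wa wb wc wd.
cmp v a va; cmp v b vb; cmp v c vc; cmp v d vd; cmp w a wa; cmp w b wb; cmp w c wc; cmp w d wd.
all: by [].
Qed.

Lemma ineq2 (a b c d v w : nat) : a < b -> b < c -> c < d ->
  v != a -> v != b -> v != c -> v != d -> w != a -> w != b -> w != c -> w != d ->
  crn a v d w + crn v a w d + (crn b v c w + crn v b w c + (crn c v b w + crn v c w b + (crn d v a w + crn v d w a + 0)))
  <= crn a v c w + crn v a w c + (crn b v d w + crn v b w d + (crn c v a w + crn v c w a + (crn d v b w + crn v d w b + 0))).
Proof. rewrite /crn => ab bc cd va vb vc vd wa wb wc wd.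
cmp v a va; cmp v b vb; cmp v c vc; cmp v d vd; cmp w a wa; cmp w b wb; cmp w c wc; cmp w d wd.
all: by [].
Qed.

Section Term.
Variable n : nat.

Definition crs (s : pairing_of n) : nat :=
  \sum_(u : 'I_(n.*2)) \sum_(v : 'I_(n.*2)) (crosses s u v : nat).

Lemma pairingK (s : pairing_of n) : is_pairing s -> involutive s.
Proof. by move=> /forallP H x; case/andP: (H x) => _ /eqP. Qed.

Lemma pairingF (s : pairing_of n) : is_pairing s -> forall x, s x != x.
Proof. by move=> /forallP H x; case/andP: (H x). Qed.

Lemma repairE (s : pairing_of n) x1 y1 x2 y2 x : repair s x1 y1 x2 y2 x =
  if x == x1 then y1 else if x == y1 then x1
  else if x == x2 then y2 else if x == y2 then x2 else s x.
Proof. by rewrite ffunE. Qed.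

Lemma crs_le (s : pairing_of n) : crs s <= (n.*2) ^ 2.
Proof.
rewrite /crs expnS expn1.
have H : crs s <= \sum_(u : 'I_(n.*2)) \sum_(v : 'I_(n.*2)) 1.
  by apply: leq_sum => u _; apply: leq_sum => v _; exact: leq_b1.
apply: leq_trans H _.
rewrite (eq_bigr (fun _ => n.*2)); last by move=> u _; rewrite sum_nat_const card_ord muln1.
by rewrite sum_nat_const card_ord.
Qed.

Lemma crs_planar (s : pairing_of n) : crs s = 0 -> planar s.
Proof.
move=> H; apply/forallP => a; apply/forallP => b; apply/negP => C.
suff : 0 < crs s by rewrite H.
rewrite /crs (bigD1 a) //= (bigD1 b) //= C.
by rewrite addnC addnA addn1.
Qed.

Section Cross.
Variables (s : pairing_of n) (a b : 'I_(n.*2)).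
Hypotheses (hs : is_pairing s) (hab : crosses s a b).
Local Notation c := (s a).
Local Notation d := (s b).
Local Notation S := [:: a; b; c; d].

Let lab : (a < b)%N. Proof. by case/and3P: hab. Qed.
Let lbc : (b < c)%N. Proof. by case/and3P: hab. Qed.
Let lcd : (c < d)%N. Proof. by case/and3P: hab. Qed.

Let neq (x y : 'I_(n.*2)) : (x < y)%N -> x != y.
Proof. by move=> h; apply/negP => /eqP E; rewrite E ltnn in h. Qed.

Let uniqS : uniq S.
Proof.
have e1 : a != b by apply: neq; clear -lab lbc lcd; lia.
have e2 : a != c by apply: neq; clear -lab lbc lcd; lia.
have e3 : a != d by apply: neq; clear -lab lbc lcd; lia.
have e4 : b != c by apply: neq; clear -lab lbc lcd; lia.
have e5 : b != d by apply: neq; clear -lab lbc lcd; lia.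
have e6 : c != d by apply: neq; clear -lab lbc lcd; lia.
by rewrite /= !inE !negb_or e1 e2 e3 e4 e5 e6.
Qed.

Let sK := pairingK hs.

Lemma notinS x : x \notin S -> [/\ x != a, x != b, x != c & x != d].
Proof. by rewrite !inE !negb_or => /and4P. Qed.

Lemma notinS_s x : x \notin S -> s x \notin S.
Proof.
move=> /notinS [xa xb xc xd]; rewrite !inE !negb_or.
apply/and4P; split; apply/negP => /eqP E.
- by move/eqP: xc; apply; rewrite -E sK.
- by move/eqP: xd; apply; rewrite -E sK.
- by move/eqP: xa; apply; rewrite -(sK x) E sK.
- by move/eqP: xb; apply; rewrite -(sK x) E sK.
Qed.

Lemma crs_decr_gen (s' : pairing_of n) :
 (forall x, x \notin S -> s' x = s x) ->
 (forall u v, u \in S -> v \in S -> crosses s' u v = false) ->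
 (forall v, v \notin S -> \sum_(u in S) ((crosses s' u v : nat) + crosses s' v u)
       <= \sum_(u in S) ((crosses s u v : nat) + crosses s v u)) ->
 crs s' < crs s.
Proof.
move=> H1 H2 H3.
rewrite /crs !(split4 _ S).
have -> : \sum_(u in S) \sum_(v in S) (crosses s' u v : nat) = 0.
  by apply: big1 => u uS; apply: big1 => v vS; rewrite H2.
have A1 : 0 < \sum_(u in S) \sum_(v in S) (crosses s u v : nat).
  have aS : a \in S by rewrite inE eqxx.
  have bS : b \in S by rewrite !inE eqxx orbT.
  rewrite (bigD1 a) //= (bigD1 b) //= hab.
  by rewrite addnC addnA addn1.
have B1 : \sum_(v | v \notin S) \sum_(u in S) ((crosses s' u v : nat) + crosses s' v u)
  <= \sum_(v | v \notin S) \sum_(u in S) ((crosses s u v : nat) + crosses s v u).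
  by apply: leq_sum => v; apply: H3.
have -> : \sum_(u | u \notin S) \sum_(v | v \notin S) (crosses s' u v : nat)
        = \sum_(u | u \notin S) \sum_(v | v \notin S) (crosses s u v : nat).
  apply: eq_bigr => u uS; apply: eq_bigr => v vS.
  by rewrite /crosses !H1 // notinS_s.
by rewrite add0n ltn_add2r; exact: leq_add A1 B1.
Qed.

Let e1 : (a == b) = false.
Proof. by apply/negbTE; apply: neq; clear -lab lbc lcd; lia. Qed.
Let f1 : (b == a) = false.
Proof. by rewrite eq_sym e1. Qed.
Let e2 : (a == c) = false.
Proof. by apply/negbTE; apply: neq; clear -lab lbc lcd; lia. Qed.
Let f2 : (c == a) = false.
Proof. by rewrite eq_sym e2. Qed.
Let e3 : (a == d) = false.
Proof. by apply/negbTE; apply: neq; clear -lab lbc lcd; lia. Qed.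
Let f3 : (d == a) = false.
Proof. by rewrite eq_sym e3. Qed.
Let e4 : (b == c) = false.
Proof. by apply/negbTE; apply: neq; clear -lab lbc lcd; lia. Qed.
Let f4 : (c == b) = false.
Proof. by rewrite eq_sym e4. Qed.
Let e5 : (b == d) = false.
Proof. by apply/negbTE; apply: neq; clear -lab lbc lcd; lia. Qed.
Let f5 : (d == b) = false.
Proof. by rewrite eq_sym e5. Qed.
Let e6 : (c == d) = false.
Proof. by apply/negbTE; apply: neq; clear -lab lbc lcd; lia. Qed.
Let f6 : (d == c) = false.
Proof. by rewrite eq_sym e6. Qed.

Lemma repair_out x1 y1 x2 y2 x : x \notin S -> [:: x1; y1; x2; y2] =i S ->
  repair s x1 y1 x2 y2 x = s x.
Proof.
move=> xS E; rewrite repairE.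
have := xS; rewrite -E !inE !negb_or => /and4P [h1 h2 h3 h4].
by rewrite (negbTE h1) (negbTE h2) (negbTE h3) (negbTE h4).
Qed.

Lemma crs_decr1 : crs (repair s a b c d) < crs s.
Proof.
apply: crs_decr_gen.
- by move=> x xS; apply: repair_out => // y; rewrite !inE; do !case: eqP => //.
- move=> u v; rewrite !inE => /or4P [] /eqP -> /or4P [] /eqP ->;
  rewrite /crosses !repairE !eqxx ?e1 ?e2 ?e3 ?e4 ?e5 ?e6 ?f1 ?f2 ?f3 ?f4 ?f5 ?f6 /=;
  apply/negP => /and3P [h1 h2 h3]; clear -h1 h2 h3 lab lbc lcd; lia.
- move=> v vS.
  have Hv : repair s a b c d v = s v by apply: repair_out => // y; rewrite !inE; do !case: eqP => //.
  rewrite -!big_uniq //= !big_cons !big_nil /crosses !repairE !eqxx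
     ?e1 ?e2 ?e3 ?e4 ?e5 ?e6 ?f1 ?f2 ?f3 ?f4 ?f5 ?f6 /= -!repairE Hv !sK.
  case/notinS: (vS) => va vb vc vd; case/notinS: (notinS_s vS) => wa wb wc wd.
  exact: (ineq1 lab lbc lcd va vb vc vd wa wb wc wd).
Qed.

Lemma crs_decr2 : crs (repair s a d b c) < crs s.
Proof.
apply: crs_decr_gen.
- by move=> x xS; apply: repair_out => // y; rewrite !inE; do !case: eqP => //.
- move=> u v; rewrite !inE => /or4P [] /eqP -> /or4P [] /eqP ->;
  rewrite /crosses !repairE !eqxx ?e1 ?e2 ?e3 ?e4 ?e5 ?e6 ?f1 ?f2 ?f3 ?f4 ?f5 ?f6 /=;
  apply/negP => /and3P [h1 h2 h3]; clear -h1 h2 h3 lab lbc lcd; lia.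
- move=> v vS.
  have Hv : repair s a d b c v = s v by apply: repair_out => // y; rewrite !inE; do !case: eqP => //.
  rewrite -!big_uniq //= !big_cons !big_nil /crosses !repairE !eqxx
     ?e1 ?e2 ?e3 ?e4 ?e5 ?e6 ?f1 ?f2 ?f3 ?f4 ?f5 ?f6 /= -!repairE Hv !sK.
  case/notinS: (vS) => va vb vc vd; case/notinS: (notinS_s vS) => wa wb wc wd.
  exact: (ineq2 lab lbc lcd va vb vc vd wa wb wc wd).
Qed.
End Cross.
End Term.

Section Cross2.
Variable n : nat.
Variables (s : pairing_of n) (a b : 'I_(n.*2)).
Hypotheses (hs : is_pairing s) (hab : crosses s a b).
Local Notation c := (s a).
Local Notation d := (s b).
Local Notation S := [:: a; b; c; d].
Let lab : (a < b)%N. Proof. by case/and3P: hab. Qed.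
Let lbc : (b < c)%N. Proof. by case/and3P: hab. Qed.
Let lcd : (c < d)%N. Proof. by case/and3P: hab. Qed.
Let neq (x y : 'I_(n.*2)) : (x < y)%N -> x != y.
Proof. by move=> h; apply/negP => /eqP E; rewrite E ltnn in h. Qed.
Let sK := pairingK hs.
Let e1 : (a == b) = false.
Proof. by apply/negbTE; apply: neq; clear -lab lbc lcd; lia. Qed.
Let f1 : (b == a) = false.
Proof. by rewrite eq_sym e1. Qed.
Let e2 : (a == c) = false.
Proof. by apply/negbTE; apply: neq; clear -lab lbc lcd; lia. Qed.
Let f2 : (c == a) = false.
Proof. by rewrite eq_sym e2. Qed.
Let e3 : (a == d) = false.
Proof. by apply/negbTE; apply: neq; clear -lab lbc lcd; lia. Qed.
Let f3 : (d == a) = false.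
Proof. by rewrite eq_sym e3. Qed.
Let e4 : (b == c) = false.
Proof. by apply/negbTE; apply: neq; clear -lab lbc lcd; lia. Qed.
Let f4 : (c == b) = false.
Proof. by rewrite eq_sym e4. Qed.
Let e5 : (b == d) = false.
Proof. by apply/negbTE; apply: neq; clear -lab lbc lcd; lia. Qed.
Let f5 : (d == b) = false.
Proof. by rewrite eq_sym e5. Qed.
Let e6 : (c == d) = false.
Proof. by apply/negbTE; apply: neq; clear -lab lbc lcd; lia. Qed.
Let f6 : (d == c) = false.
Proof. by rewrite eq_sym e6. Qed.

Lemma r1a : repair s a b c d a = b. Proof. by rewrite repairE eqxx. Qed.
Lemma r1b : repair s a b c d b = a. Proof. by rewrite repairE f1 eqxx. Qed.
Lemma r1c : repair s a b c d c = d. Proof. by rewrite repairE f2 f4 eqxx. Qed.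
Lemma r1d : repair s a b c d d = c. Proof. by rewrite repairE f3 f5 f6 eqxx. Qed.
Lemma r2a : repair s a d b c a = d. Proof. by rewrite repairE eqxx. Qed.
Lemma r2d : repair s a d b c d = a. Proof. by rewrite repairE f3 eqxx. Qed.
Lemma r2b : repair s a d b c b = c. Proof. by rewrite repairE f1 e5 eqxx. Qed.
Lemma r2c : repair s a d b c c = b. Proof. by rewrite repairE f2 e6 f4 eqxx. Qed.

Lemma repair_tp1 x : repair s a b c d x = s (tperm b c (tperm a d x)).
Proof.
case: (boolP (x \in S)) => xS.
  move: xS; rewrite !inE => /or4P [] /eqP ->.
  - by rewrite r1a tpermL tpermD ?e1 ?e2 ?e3 ?e4 ?e5 ?e6 ?f1 ?f2 ?f3 ?f4 ?f5 ?f6 // sK.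
  - by rewrite r1b [tperm a d b]tpermD ?e1 ?e2 ?e3 ?e4 ?e5 ?e6 ?f1 ?f2 ?f3 ?f4 ?f5 ?f6 // tpermL sK.
  - by rewrite r1c [tperm a d c]tpermD ?e1 ?e2 ?e3 ?e4 ?e5 ?e6 ?f1 ?f2 ?f3 ?f4 ?f5 ?f6 // tpermR.
  - by rewrite r1d tpermR tpermD ?e1 ?e2 ?e3 ?e4 ?e5 ?e6 ?f1 ?f2 ?f3 ?f4 ?f5 ?f6 .
have E : [:: a; b; c; d] =i S by [].
rewrite (@repair_out n s a b _ _ _ _ x xS E).
case/notinS: xS => xa xb xc xd.
rewrite eq_sym in xa; rewrite eq_sym in xb; rewrite eq_sym in xc; rewrite eq_sym in xd.
by rewrite (tpermD xa xd) (tpermD xb xc).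
Qed.

Lemma repair_tp2 x : repair s a d b c x = s (tperm c d (tperm a b x)).
Proof.
case: (boolP (x \in S)) => xS.
  move: xS; rewrite !inE => /or4P [] /eqP ->.
  - by rewrite r2a tpermL tpermD ?e1 ?e2 ?e3 ?e4 ?e5 ?e6 ?f1 ?f2 ?f3 ?f4 ?f5 ?f6.
  - by rewrite r2b tpermR tpermD ?e1 ?e2 ?e3 ?e4 ?e5 ?e6 ?f1 ?f2 ?f3 ?f4 ?f5 ?f6.
  - by rewrite r2c [tperm a b c]tpermD ?e1 ?e2 ?e3 ?e4 ?e5 ?e6 ?f1 ?f2 ?f3 ?f4 ?f5 ?f6 // tpermL sK.
  - by rewrite r2d [tperm a b d]tpermD ?e1 ?e2 ?e3 ?e4 ?e5 ?e6 ?f1 ?f2 ?f3 ?f4 ?f5 ?f6 // tpermR sK.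
have E : [:: a; d; b; c] =i S by move=> y; rewrite !inE; do !case: eqP => //.
rewrite (@repair_out n s a b _ _ _ _ x xS E).
case/notinS: xS => xa xb xc xd.
rewrite eq_sym in xa; rewrite eq_sym in xb; rewrite eq_sym in xc; rewrite eq_sym in xd.
by rewrite (tpermD xa xb) (tpermD xc xd).
Qed.

Lemma repair_pairing1 : is_pairing (repair s a b c d).
Proof.
apply/forallP => x.
case: (boolP (x \in S)) => xS.
  move: xS; rewrite !inE => /or4P [] /eqP ->.
  - by rewrite r1a r1b ?e1 ?e2 ?e3 ?e4 ?e5 ?e6 ?f1 ?f2 ?f3 ?f4 ?f5 ?f6 eqxx.
  - by rewrite r1b r1a ?e1 ?e2 ?e3 ?e4 ?e5 ?e6 ?f1 ?f2 ?f3 ?f4 ?f5 ?f6 eqxx.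
  - by rewrite r1c r1d ?e1 ?e2 ?e3 ?e4 ?e5 ?e6 ?f1 ?f2 ?f3 ?f4 ?f5 ?f6 eqxx.
  - by rewrite r1d r1c ?e1 ?e2 ?e3 ?e4 ?e5 ?e6 ?f1 ?f2 ?f3 ?f4 ?f5 ?f6 eqxx.
have E : [:: a; b; c; d] =i S by [].
rewrite !(@repair_out n s a b) //; last exact: (notinS_s hs).
by rewrite sK eqxx andbT (pairingF hs).
Qed.

Lemma repair_pairing2 : is_pairing (repair s a d b c).
Proof.
apply/forallP => x.
case: (boolP (x \in S)) => xS.
  move: xS; rewrite !inE => /or4P [] /eqP ->.
  - by rewrite r2a r2d ?e1 ?e2 ?e3 ?e4 ?e5 ?e6 ?f1 ?f2 ?f3 ?f4 ?f5 ?f6 eqxx.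
  - by rewrite r2b r2c ?e1 ?e2 ?e3 ?e4 ?e5 ?e6 ?f1 ?f2 ?f3 ?f4 ?f5 ?f6 eqxx.
  - by rewrite r2c r2b ?e1 ?e2 ?e3 ?e4 ?e5 ?e6 ?f1 ?f2 ?f3 ?f4 ?f5 ?f6 eqxx.
  - by rewrite r2d r2a ?e1 ?e2 ?e3 ?e4 ?e5 ?e6 ?f1 ?f2 ?f3 ?f4 ?f5 ?f6 eqxx.
have E : [:: a; d; b; c] =i S by move=> y; rewrite !inE; do !case: eqP => //.
rewrite !(@repair_out n s a b) //; last exact: (notinS_s hs).
by rewrite sK eqxx andbT (pairingF hs).
Qed.

End Cross2.


Lemma card_between m (a b : nat) : a < b -> b <= m ->
  #|[set y : 'I_m | a < y < b]| = b - a - 1.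
Proof.
move=> ab bm.
rewrite -sum1_card big_mkcond /=.
rewrite (eq_bigr (fun i : 'I_m => ((a < i < b) : nat))); last by move=> i _; rewrite inE; case: (_ && _).
rewrite -(big_mkord xpredT (fun i => ((a < i < b) : nat))).
rewrite (big_cat_nat _ (n := a.+1)) //=; last by lia.
rewrite (big_cat_nat _ (n := b) (m := a.+1)) //=.
rewrite big1_seq; last by move=> i /andP [_]; rewrite mem_index_iota => /andP [_ h]; 
  rewrite ltnNge -ltnS h.
rewrite [X in _ + (_ + X)]big1_seq; last by move=> i /andP [_]; rewrite mem_index_iota => /andP [h _];
  rewrite andbC ltnNge h.
rewrite (eq_big_seq (fun _ => 1)); last by move=> i; rewrite mem_index_iota => /andP [h1 h2]; rewrite h1 h2.
by rewrite sum_nat_const_nat muln1; lia.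
Qed.

Section OE.
Variable n : nat.
Variable s : pairing_of n.
Hypotheses (hs : is_pairing s) (pl : planar s).
Let sK := pairingK hs.

Let np u v : crosses s u v = false.
Proof. by apply/negbTE; move/forallP: pl => /(_ u) /forallP /(_ v). Qed.

Let key (a : 'I_(n.*2)) : a < s a -> odd (s a) = ~~ odd a.
Proof.
move=> ab.
set I := [set y : 'I_(n.*2) | a < y < s a].
have cl : forall y, y \in I -> s y \in I.
  move=> y; rewrite !inE => /andP [h1 h2].
  have n1 : s y != a by apply/negP => /eqP E; move: h2; rewrite -E sK ltnn.
  have n2 : s y != s a by apply/negP => /eqP E; move: h1; rewrite -(sK y) E sK ltnn.
  case: (ltngtP (s y) a) => h3.
  - by move: (np (s y) a); rewrite /crosses sK h3 h1 h2.
  - case: (ltngtP (s y) (s a)) => h4; first by rewrite ?h3 ?h4.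
      by move: (np a y); rewrite /crosses h1 h2 h4.
    by move: n2; rewrite (val_inj h4) eqxx.
  - by move: n1; rewrite (val_inj h3) eqxx.
set L := [set y | (y \in I) && (y < s y)].
have IU : I = L :|: s @: L.
  apply/setP => y; rewrite !inE; apply/idP/orP.
  - move=> yI; case: (ltngtP y (s y)) => h.
    + by left; rewrite yI ?h.
    + right; apply/imsetP; exists (s y); last by rewrite sK.
      rewrite /L inE; apply/andP; split; first by apply: cl; rewrite inE.
      by rewrite sK.
    + by move: (pairingF hs y); rewrite -(val_inj h) eqxx.
  - case; first by case/andP.
    case/imsetP => z; rewrite inE => /andP [zI _] ->.
    by move: (cl z); rewrite !inE; apply; move: zI; rewrite !inE.
have D : L :&: s @: L = set0.
  apply/setP => y; rewrite !inE; apply/negP => /andP [/andP [_ h] /imsetP [z]].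
  rewrite inE => /andP [_ h'] E; move: h h'; rewrite E sK => h h'.
  by move: (ltn_trans h h'); rewrite ltnn.
have cI : #|I| = (s a - a - 1)%N by apply: card_between => //; exact: ltnW (ltn_ord _).
have cI2 : #|I| = (#|L| + #|L|)%N.
  by rewrite IU cardsU D cards0 subn0 card_imset //; apply: can_inj sK.
have E : (nat_of_ord (s a) = a + 1 + (#|L| + #|L|))%N by rewrite -cI2 cI; lia.
by rewrite E addnn !oddD odd_double /= addbT addbF.
Qed.

Lemma planar_OE x : odd (s x) = ~~ odd x.
Proof.
case: (ltngtP x (s x)) => h; first exact: key.
  by have := @key (s x); rewrite sK => /(_ h) ->; rewrite negbK.
by move: (pairingF hs x); rewrite -(val_inj h) eqxx.
Qed.
End OE.


Import GRing.Theory.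

Section Sign.
Variable n : nat.

Lemma ev_proof (k : 'I_n) : k.*2 < n.*2.
Proof. by rewrite ltn_double. Qed.
Definition ev (k : 'I_n) : 'I_(n.*2) := Ordinal (ev_proof k).

Lemma ev_inj : injective ev.
Proof. by move=> k1 k2 /(congr1 val) /= /double_inj /val_inj. Qed.

Definition OE (s : pairing_of n) := forall x, odd (s x) = ~~ odd x.

Section OneP.
Variable s : pairing_of n.
Hypotheses (hs : is_pairing s) (oe : OE s).
Let sK := pairingK hs.

Lemma g_proof (k : 'I_n) : (s (ev k))./2 < n.
Proof. by rewrite ltn_half_double. Qed.
Definition gfun (k : 'I_n) : 'I_n := Ordinal (g_proof k).

Lemma s_ev_val k : nat_of_ord (s (ev k)) = (gfun k).*2.+1.
Proof.
have o : odd (s (ev k)) by rewrite oe /= odd_double.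
by rewrite -[LHS]odd_double_half o.
Qed.

Lemma gfun_inj : injective gfun.
Proof.
move=> k1 k2 E.
apply: ev_inj; apply: (can_inj sK); apply: ord_inj.
by rewrite !s_ev_val E.
Qed.

Definition pOE : {perm 'I_n} := perm gfun_inj.

Lemma pOE_val k : nat_of_ord (s (ev k)) = (pOE k).*2.+1.
Proof. by rewrite permE s_ev_val. Qed.

Lemma at_natE (k : 'I_n) : at_nat s k.*2 = s (ev k).
Proof.
rewrite /at_nat insubT; first exact: ev_proof.
move=> P /=; congr (nat_of_ord (s _)); exact: val_inj.
Qed.

Lemma sign_OE_E : sign_OE s = ((-1) ^+ odd_perm pOE)%R.
Proof.
rewrite /sign_OE; case: pickP => [q /forallP Hq | H].
  congr (_ ^+ _)%R; congr odd_perm; apply/permP => k.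
  apply: val_inj; rewrite (eqP (Hq k)) at_natE permE.
  by [].
move: (H pOE) => /negP; case; apply/forallP => k.
by rewrite at_natE permE.
Qed.
End OneP.
End Sign.
Arguments ev {n}.

Section TwoP.
Variable n : nat.
Variables p r : pairing_of n.
Hypotheses (hp : is_pairing p) (hr : is_pairing r) (op : OE p) (or : OE r).
Let pK := pairingK hp.
Let rK := pairingK hr.
Local Open Scope group_scope.
Let s := sperm p r.
Let Pp := pOE hp op.
Let Pr := pOE hr or.
Let q := Pr * Pp^-1.

Lemma s_ev k : s (ev k) = ev (q k).
Proof.
rewrite /s (sE pK rK).
have E : p (ev (q k)) = r (ev k).
  apply: ord_inj; rewrite !pOE_val; congr ((_).*2.+1).
  by rewrite /q permM permKV.
by rewrite -E pK.
Qed.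

Lemma pw_ev i k : (s ^+ i) (ev k) = ev ((q ^+ i) k).
Proof.
elim: i => [|i IH]; first by rewrite !expg0 !perm1.
by rewrite !expgSr (permM (s ^+ i)) (permM (q ^+ i)) IH s_ev.
Qed.

Lemma porbit_ev k : porbit s (ev k) = ev @: porbit q k.
Proof.
apply/setP => y; apply/porbitP/imsetP.
- by case=> i ->; exists ((q ^+ i) k); [exact: mem_porbit | exact: pw_ev].
- by case=> z /porbitP [i ->] ->; exists i; rewrite pw_ev.
Qed.

Lemma odd_s x : odd (s x) = odd x.
Proof. by rewrite /s (sE pK rK) op or negbK. Qed.

Lemma odd_orbit x y : y \in porbit s x -> odd y = odd x.
Proof.
case/porbitP => i ->; elim: i => [|i IH]; first by rewrite expg0 perm1.
by rewrite expgSr (permM (s ^+ i)) odd_s.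
Qed.

Lemma porbit_p x : porbit s (p x) = p @: porbit s x.
Proof.
have pF := pairingF hp; have rF := pairingF hr.
apply/setP => y; apply/idP/imsetP.
- move=> H; exists (p y); last by rewrite pK.
  by rewrite -(pK x); apply: (K1 pK rK).
- by case=> z H ->; apply: (K1 pK rK).
Qed.

Lemma porbits_q : #|porbits s| = (#|porbits q|).*2.
Proof.
set Es := [set porbit s (ev k) | k : 'I_n].
set Os := [set porbit s (p (ev k)) | k : 'I_n].
have HE : Es = (fun O : {set 'I_n} => ev @: O) @: porbits q.
  by rewrite /porbits -imset_comp; apply: eq_imset => k; rewrite /= porbit_ev.
have HO : Os = (fun O : {set 'I_(n.*2)} => p @: O) @: Es.
  by rewrite -imset_comp; apply: eq_imset => k; rewrite /= porbit_p.
have cE : #|Es| = #|porbits q| by rewrite HE card_imset //; apply: imset_inj; exact: ev_inj.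
have cO : #|Os| = #|Es| by rewrite HO card_imset //; apply: imset_inj; exact: (can_inj pK).
have U : porbits s = Es :|: Os.
  apply/setP => O; rewrite inE; apply/imsetP/orP.
  - case=> x _ ->.
    case: (boolP (odd x)) => ox.
    + right; apply/imsetP.
      have xl : (p x)./2 < n by rewrite ltn_half_double.
      exists (Ordinal xl) => //.
      have -> : ev (Ordinal xl) = p x.
        apply: ord_inj => /=.
        by rewrite -[RHS]odd_double_half op ox.
      by rewrite pK.
    + left; apply/imsetP.
      have xl : x./2 < n by rewrite ltn_half_double.
      exists (Ordinal xl) => //; congr (porbit s _); apply: ord_inj => /=.
      by rewrite -[LHS]odd_double_half (negbTE ox).
  - by case=> /imsetP [k _ ->]; [exists (ev k) | exists (p (ev k))].
have D : Es :&: Os = set0.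
  apply/setP => O; rewrite !inE; apply/negP => /andP [/imsetP [k _ ->] /imsetP [j _ /eqP]].
  rewrite eq_porbit_mem => H.
  by have := odd_orbit H; rewrite op /= !odd_double.
by rewrite U cardsU D cards0 subn0 cO cE addnn.
Qed.

Lemma ncompE2 : (ncomp p r).*2 = #|porbits s|.
Proof.
exact: (ncomp_porbits pK rK (pairingF hp) (pairingF hr)).
Qed.

Lemma ncomp_q : ncomp p r = #|porbits q|.
Proof. by apply: double_inj; rewrite ncompE2 porbits_q. Qed.

Local Open Scope ring_scope.
Lemma sign_rel : sign_OE p * (-1) ^+ ncomp p r * (-1) ^+ n = sign_OE r :> int.
Proof.
rewrite (sign_OE_E hp op) (sign_OE_E hr or) ncomp_q.
have Hq : odd_perm q = odd_perm Pr (+) odd_perm Pp by rewrite /q odd_permM odd_permV.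
have Hq2 : odd_perm q = odd n (+) odd #|porbits q| by rewrite /odd_perm card_ord.
rewrite -(signr_odd _ #|porbits q|) -(signr_odd _ n) -!signr_addb; congr (_ ^+ _).
rewrite -/Pp -/Pr.
move: Hq Hq2; case: (odd_perm q); case: (odd_perm Pr); case: (odd_perm Pp);
  case: (odd n); case: (odd #|porbits q|) => //.
Qed.
End TwoP.


Lemma ncompE n (p r : pairing_of n) : is_pairing p -> is_pairing r ->
  (ncomp p r).*2 = #|porbits (sperm p r)|.
Proof.
move=> hp hr.
exact: (ncomp_porbits (pairingK hp) (pairingK hr) (pairingF hp) (pairingF hr)).
Qed.

Section SkI.
Variable n : nat.
Variables (p s : pairing_of n) (a b : 'I_(n.*2)).
Hypotheses (hp : is_pairing p) (hs : is_pairing s) (hab : crosses s a b).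
Local Notation c := (s a).
Local Notation d := (s b).
Let lab : (a < b)%N. Proof. by case/and3P: hab. Qed.
Let lbc : (b < c)%N. Proof. by case/and3P: hab. Qed.
Let lcd : (c < d)%N. Proof. by case/and3P: hab. Qed.
Let neq (x y : 'I_(n.*2)) : (x < y)%N -> x != y.
Proof. by move=> h; apply/negP => /eqP E; rewrite E ltnn in h. Qed.
Let sK := pairingK hs.
Let pK := pairingK hp.

Lemma sperm_repair1 : sperm p (repair s a b c d) = (tperm a d * (tperm b c * sperm p s))%g.
Proof.
apply/permP => x.
have h1 := repair_pairing1 hs hab.
by rewrite (sE pK (pairingK h1)) (permM (tperm a d)) (permM (tperm b c)) (sE pK sK) repair_tp1.
Qed.

Lemma sperm_repair2 : sperm p (repair s a d b c) = (tperm a b * (tperm c d * sperm p s))%g.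
Proof.
apply/permP => x.
have h1 := repair_pairing2 hs hab.
by rewrite (sE pK (pairingK h1)) (permM (tperm a b)) (permM (tperm c d)) (sE pK sK) repair_tp2.
Qed.

Local Open Scope ring_scope.
Lemma skein_int :
  ((-2) ^+ ncomp p s : int) = - (-2) ^+ ncomp p (repair s a b c d) - (-2) ^+ ncomp p (repair s a d b c).
Proof.
have ab : a != b by apply: neq; clear -lab lbc lcd; lia.
have ac : a != c by apply: neq; clear -lab lbc lcd; lia.
have ad : a != d by apply: neq; clear -lab lbc lcd; lia.
have bc : b != c by apply: neq; clear -lab lbc lcd; lia.
have bd : b != d by apply: neq; clear -lab lbc lcd; lia.
have cd : c != d by apply: neq; clear -lab lbc lcd; lia.
have := skein_counts pK sK (pairingF hp) (pairingF hs) ab ad bc cd (erefl _) (erefl _).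
rewrite -sperm_repair1 -sperm_repair2 -!ncompE //;
  try (exact: repair_pairing1); try (exact: repair_pairing2).
move: (ncomp p s) (ncomp p (repair s a b c d)) (ncomp p (repair s a d b c)) => x y z.
case=> [[H1 H2]|[[H1 H2]|[H1 H2]]].
- have -> : x = y.+1 by lia.
  have -> : z = y by lia.
  by rewrite exprS; ring.
- have -> : y = x by lia.
  have -> : z = x.+1 by lia.
  by rewrite exprS; ring.
- have -> : y = x.+1 by lia.
  have -> : z = x by lia.
  by rewrite exprS; ring.
Qed.
End SkI.


Lemma Pcoef_fuel_S n f (sigma rho : pairing_of n) : Pcoef_fuel f.+1 sigma rho =
  if planar rho then Posz (sigma == rho) else
    match [pick ab : 'I_(n.*2) * 'I_(n.*2) | crosses rho ab.1 ab.2] with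
    | Some (a, b) =>
        let c := rho a in let d := rho b in
        (- Pcoef_fuel f sigma (repair rho a b c d)
         - Pcoef_fuel f sigma (repair rho a d b c))%R
    | None => 0%R
    end.
Proof. by []. Qed.

Lemma Pcoef_planar n f (sigma rho : pairing_of n) : planar rho ->
  Pcoef_fuel f sigma rho = Posz (sigma == rho).
Proof. by case: f => [|f] /= ->. Qed.

Section Main.
Variable n : nat.
Variable pi : pairing_of n.
Hypotheses (hp : is_pairing pi) (pp : planar pi).
Local Open Scope ring_scope.

Let h (sigma : pairing_of n) : int := sign_OE sigma * 2 ^+ ncomp pi sigma.
Let fL (rho : pairing_of n) : int :=
  sign_OE pi * (-1) ^+ ncomp pi rho * (-1) ^+ n * 2 ^+ ncomp pi rho.

Let fL_skein (rho : pairing_of n) a b : is_pairing rho -> crosses rho a b ->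
  fL rho = - fL (repair rho a b (rho a) (rho b)) - fL (repair rho a (rho b) b (rho a)).
Proof.
move=> hr hab.
have E : forall c, fL c = sign_OE pi * (-1) ^+ n * (-2) ^+ ncomp pi c.
  move=> c; have m2 : (-2 : int) ^+ ncomp pi c = (-1) ^+ ncomp pi c * 2 ^+ ncomp pi c.
    by rewrite -exprMn mulN1r.
  rewrite /fL m2 !mulrA; congr (_ * _); rewrite -!mulrA; congr (_ * _); exact: mulrC.
by rewrite !E (skein_int hp hr hab) mulrBr mulrN.
Qed.

Let fL_planar (rho : pairing_of n) : is_pairing rho -> planar rho -> fL rho = h rho.
Proof.
move=> hr pr.
by rewrite /fL /h -(sign_rel hp hr (planar_OE hp pp) (planar_OE hr pr)).
Qed.

Lemma main_fuel f : forall rho : pairing_of n, is_pairing rho -> (crs rho <= f)%N ->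
  \sum_(sigma : pairing_of n | is_pairing sigma && planar sigma) Pcoef_fuel f sigma rho * h sigma
  = fL rho.
Proof.
have planar_case : forall g (rho : pairing_of n), is_pairing rho -> planar rho ->
  \sum_(sigma : pairing_of n | is_pairing sigma && planar sigma) Pcoef_fuel g sigma rho * h sigma
  = fL rho.
  move=> g rho hr pr.
  under eq_bigr => sigma _ do rewrite (Pcoef_planar _ _ pr).
  rewrite (bigD1 rho) /=; last by rewrite hr pr.
  rewrite big1 ?addr0 => [|sigma /andP [_ ne]]; last by rewrite (negbTE ne) mul0r.
  by rewrite eqxx mul1r fL_planar.
elim: f => [|f IH] rho hr hc.
  have pr : planar rho by apply: crs_planar; lia.
  exact: planar_case.
case: (boolP (planar rho)) => pr; first exact: planar_case.
under eq_bigr => sigma _ do rewrite Pcoef_fuel_S (negbTE pr).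
case: pickP => [[a b] /= hab | none]; last first.
  case/negP: pr; apply/forallP => a; apply/forallP => b.
  by move: (none (a, b)) => /= ->.
rewrite (eq_bigr (fun sigma => - (Pcoef_fuel f sigma (repair rho a b (rho a) (rho b)) * h sigma)
   - (Pcoef_fuel f sigma (repair rho a (rho b) b (rho a)) * h sigma))); last first.
  by move=> sigma _; rewrite mulrBl mulNr.
rewrite big_split /= !sumrN.
have h1 := repair_pairing1 hr hab; have h2 := repair_pairing2 hr hab.
have c1 := crs_decr1 hr hab; have c2 := crs_decr2 hr hab.
rewrite IH //; last by lia.
rewrite IH //; last by lia.
by rewrite (fL_skein hr hab).
Qed.
End Main.


Unset Implicit Arguments.
Local Open Scope ring_scope.

Theorem mainTheorem13 (n : nat) (rho pi : pairing_of n) :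
  is_pairing rho -> is_pairing pi -> planar pi ->
  sign_OE pi * (-1) ^+ ncomp pi rho * (-1) ^+ n * 2 ^+ ncomp pi rho
  = \sum_(sigma : pairing_of n | is_pairing sigma && planar sigma)
      Pcoef sigma rho * sign_OE sigma * 2 ^+ ncomp pi sigma.
Proof.
move=> hr hp pl.
rewrite /Pcoef (eq_bigr (fun sigma => Pcoef_fuel ((n.*2) ^ 2) sigma rho
   * (sign_OE sigma * 2 ^+ ncomp pi sigma))); last by move=> s _; rewrite mulrA.
by rewrite (main_fuel hp pl hr (crs_le rho)).
Qed.
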